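(* Let $\alpha,c\in\mathbb{N}$, $\alpha,c\ge1$, and let $F=(n_F)_{n\ge0}$ with $0_F=1$ and $n_F=\alpha^{n-1}c^n$ for $n\ge1$ (so that $(m+k)_F=\alpha\, m_F\, k_F$ for all $m,k\ge1$). Then for all $1\le a\le b$, the layer $\langle\Phi_a\to\Phi_b\rangle$ of the cobweb poset of $F$ admits a tiling by blocks of type $\sigma P_{b-a+1}$.
   Context: Notation: $n_F\equiv F_n$. The cobweb poset of $F$ has, for each $s\ge1$, a level $\Phi_s$ consisting of $s_F$ distinct vertices (levels pairwise disjoint), plus a root level $\Phi_0$ with one vertex; for $x\in\Phi_i$, $y\in\Phi_j$ one has $x<y$ iff $i<j$. For $1\le a\le b$, the layer $\langle\Phi_a\to\Phi_b\rangle$ is the subposet on $\Phi_a\cup\dots\cup\Phi_b$; it has $m=b-a+1$ levels and its maximal chains form the set $\Phi_a\times\dots\times\Phi_b$. For a permutation $\sigma$ of $\{1,\dots,m\}$, a block of type $\sigma P_m$ in this layer is the subposet induced on $V_a\cup\dots\cup V_b$ where $V_{a-1+i}\subseteq\Phi_{a-1+i}$ and $|V_{a-1+i}|=\sigma(i)_F$ for $i=1,\dots,m$; its maximal chains form the set $V_a\times\dots\times V_b$. A tiling of the layer is a finite family of such blocks ($\sigma$ may vary from block to block) whose sets $V_a\times\dots\times V_b$ partition $\Phi_a\times\dots\times\Phi_b$ (pairwise max-disjoint and covering all maximal chains). *)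

(* Defs.v *)
From mathcomp Require Import all_boot all_fingroup.
Set Implicit Arguments. Unset Strict Implicit. Unset Printing Implicit Defensive.

Definition Fseq (alpha c : nat) (n : nat) : nat :=
  if n is n'.+1 then alpha ^ n' * c ^ n else 1.

(* Cobweb poset of F: level Phi_s has (F s) vertices, encoded as the naturals
   k < F s (the vertex (s,k)); levels are disjoint by construction.
   Layer <Phi_a -> Phi_b> with m = b - a + 1 levels: level i : 'I_m is Phi_(a+i).
   A maximal chain of the layer is an element of Phi_a x ... x Phi_b, encoded as
   c : 'I_m -> nat with c i < F (a + i). *)
Definition layer_chain (F : nat -> nat) (a m : nat) (ch : 'I_m -> nat) : Prop :=
  forall i : 'I_m, ch i < F (a + i).

(* A block of type sigma P_m in the layer: subsets V_(a+i) of Phi_(a+i)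
   (duplicate-free lists of vertex indices < F (a+i)) with
   |V_(a+i)| = (sigma(i+1))_F  (sigma on {1..m} read as a permutation of 'I_m). *)
Definition is_block (F : nat -> nat) (a m : nat) (sigma : 'S_m)
  (V : 'I_m -> seq nat) : Prop :=
  forall i : 'I_m,
    [/\ uniq (V i), all (fun x => x < F (a + i)) (V i) & size (V i) = F (sigma i).+1].

Definition chain_in_block (m : nat) (V : 'I_m -> seq nat) (ch : 'I_m -> nat) : bool :=
  [forall i : 'I_m, ch i \in V i].

Definition is_tiling (F : nat -> nat) (a m : nat)
  (T : seq ('S_m * ('I_m -> seq nat))) : Prop :=
  (forall j, j < size T -> is_block F a (nth (1%g, fun _ => [::]) T j).1
                                    (nth (1%g, fun _ => [::]) T j).2) /\
  (forall ch : 'I_m -> nat, layer_chain F a ch ->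
     count (fun B => chain_in_block B.2 ch) T = 1).

(* Main.v *)
Require Import Defs.
From mathcomp Require Import all_boot all_fingroup.

Lemma key (F : nat -> nat) (a m : nat) (d : 'I_m -> nat)
  (hd : forall i, 0 < d i) (hdiv : forall i, d i %| F (a + i))
  (hsig : forall i : 'I_m, d i = F ((1%g : 'S_m) i).+1) :
  exists T : seq ('S_m * ('I_m -> seq nat)), is_tiling F a T.
Proof.
set N := (\sum_(i < m) F (a + i)).+1.
pose Vof (g : {ffun 'I_m -> 'I_N}) := fun i : 'I_m => iota (g i * d i) (d i).
pose valid (g : {ffun 'I_m -> 'I_N}) := [forall i, (g i).+1 * d i <= F (a + i)].
pose s := [seq g <- enum {ffun 'I_m -> 'I_N} | valid g].
exists [seq ((1%g : 'S_m), Vof g) | g <- s].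
pose gdef : {ffun 'I_m -> 'I_N} := [ffun _ => ord0].
split.
  move=> j; rewrite size_map => hj.
  rewrite (nth_map gdef) //=.
  have : nth gdef s j \in s by apply: mem_nth.
  rewrite mem_filter => /andP[/forallP hv _] i.
  split.
  - exact: iota_uniq.
  - apply/allP => x; rewrite mem_iota => /andP[_ hx].
    apply: leq_trans hx _; rewrite addnC -mulSn; exact: hv.
  - by rewrite size_iota hsig.
move=> ch hch.
have hlt : forall i, ch i %/ d i < N.
  move=> i; rewrite ltnS; apply: leq_trans (leq_div _ _) _.
  rewrite (bigD1 i) //=; apply: leq_trans (ltnW (hch i)) _; exact: leq_addr.
pose g0 : {ffun 'I_m -> 'I_N} := [ffun i => Ordinal (hlt i)].
rewrite count_map count_filter.
rewrite (@eq_count _ _ (pred1 g0)); last first.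
  move=> g /=; apply/idP/eqP.
    move=> /andP[/forallP hin _]; apply/ffunP => i; apply/val_inj.
    rewrite ffunE /=.
    move: (hin i); rewrite mem_iota => /andP[h1 h2].
    apply/eqP; rewrite eqn_leq.
    by rewrite leq_divRL // h1 /= -ltnS ltn_divLR // mulSn addnC h2.
  move=> ->; apply/andP; split.
    apply/forallP => i; rewrite /Vof ffunE /= mem_iota leq_divM /=.
    by rewrite addnC -mulSn -ltn_divLR // ltnSn.
  apply/forallP => i; rewrite ffunE /=.
  by rewrite -leq_divRL // ltn_divLR // divnK.
by rewrite count_uniq_mem ?enum_uniq // mem_enum.
Qed.

Lemma Fdvd alpha c n k : n.+1 <= k -> Fseq alpha c n.+1 %| Fseq alpha c k.
Proof.
case: k => // k; rewrite ltnS /= => h.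
by apply: dvdn_mul; apply: dvdn_exp2l.
Qed.

Theorem mainTheorem7 (alpha c : nat) (halpha : 1 <= alpha) (hc : 1 <= c)
  (a b : nat) (ha : 1 <= a) (hab : a <= b) :
  exists T : seq ('S_(b - a + 1) * ('I_(b - a + 1) -> seq nat)),
    is_tiling (Fseq alpha c) a T.
Proof.
apply: (@key _ a (b - a + 1) (fun i => Fseq alpha c (nat_of_ord i).+1)).
- by move=> i /=; rewrite muln_gt0 !expn_gt0 halpha hc.
- move=> i; apply: Fdvd; rewrite -addn1 addnC leq_add2r; exact: ha.
- by move=> i; rewrite perm1.
Qed.
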